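(* Let $A$ be a commutative ring and $E$ an $A$-module. Then the trivial ring extension $A\propto E$ is locally stable if and only if $A$ is locally stable.
   Context: All rings are commutative with identity. The trivial ring extension $A\propto E$ is the set of pairs $(a,e)$, $a\in A$, $e\in E$, with componentwise addition and multiplication $(a,e)(b,f)=(ab,af+be)$. A ring $S$ has stable range 1 if whenever $aS+bS=S$ there is $y\in S$ with $a+by$ a unit. $S$ is locally stable if whenever $a,b\in S$ with $aS+bS=S$ there is $y\in S$ such that $S/(a+by)S$ has stable range 1. *)

(* Defs.v *)
From HB Require Import structures.
From mathcomp Require Import all_boot all_algebra.
Set Implicit Arguments. Unset Strict Implicit. Unset Printing Implicit Defensive.
Import GRing.Theory.
Local Open Scope ring_scope.

Definition triv_ext (A : comPzRingType) (E : lmodType A) : Type := (A * E)%type.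

Section TrivExt.
Variables (A : comPzRingType) (E : lmodType A).
Local Notation T := (triv_ext E).

HB.instance Definition _ := GRing.Zmodule.on T.

Definition te_one : T := (1, 0).
Definition te_mul (x y : T) : T := (x.1 * y.1, x.1 *: y.2 + y.1 *: x.2).

Lemma te_mulA : associative te_mul.
Proof.
case=> a e [b f] [c g]; rewrite /te_mul /=; congr pair; first by rewrite mulrA.
rewrite !scalerDr !scalerA [c * a]mulrC [c * b]mulrC.
by rewrite addrA.
Qed.

Lemma te_mulC : commutative te_mul.
Proof. by case=> a e [b f]; rewrite /te_mul /= mulrC addrC. Qed.

Lemma te_mul1 : left_id te_one te_mul.
Proof. by case=> a e; rewrite /te_mul /= mul1r scale1r scaler0 addr0. Qed.

Lemma te_mulDl : left_distributive te_mul +%R.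
Proof.
case=> a e [b f] [c g]; rewrite /te_mul /=; congr pair; first by rewrite mulrDl.
by rewrite scalerDl scalerDr addrACA.
Qed.

HB.instance Definition _ := GRing.Zmodule_isComPzRing.Build T
  te_mulA te_mulC te_mul1 te_mulDl.

Lemma triv_ext_mulE (a b : A) (e f : E) :
  ((a, e) : T) * (b, f) = (a * b, a *: f + b *: e).
Proof. by []. Qed.

End TrivExt.

Notation "A ∝ E" := (@triv_ext A E) (at level 40, format "A  ∝  E").

Definition is_unit (S : comPzRingType) (x : S) : Prop := exists z : S, x * z = 1.

Definition stable_range1 (S : comPzRingType) : Prop :=
  forall a b : S, (exists x u : S, a * x + b * u = 1) ->
    exists y : S, is_unit (a + b * y).

Definition in_principal (S : comPzRingType) (c x : S) : Prop :=
  exists t : S, x = c * t.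

(* The quotient ring S/cS has stable range 1.  Written out on representatives:
   for classes [a],[b] of S/cS, [a](S/cS)+[b](S/cS) = S/cS means
   a x + b u ≡ 1 (mod cS) for some x,u; and [a]+[b][y] is a unit of S/cS
   means (a + b y) z ≡ 1 (mod cS) for some z. *)
Definition quot_stable_range1 (S : comPzRingType) (c : S) : Prop :=
  forall a b : S, (exists x u : S, in_principal c (a * x + b * u - 1)) ->
    exists y z : S, in_principal c ((a + b * y) * z - 1).

Definition locally_stable (S : comPzRingType) : Prop :=
  forall a b : S, (exists x u : S, a * x + b * u = 1) ->
    exists y : S, quot_stable_range1 (a + b * y).

(* Main.v *)
Require Import Defs.
From HB Require Import structures.
From mathcomp Require Import all_boot all_algebra.
Import GRing.Theory.
Local Open Scope ring_scope.

Section Aux.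
Variables (A : comPzRingType) (E : lmodType A).
Local Notation T := (A ∝ E).

Definition inj (a : A) : T := (a, 0).
Lemma inj_mul (a b : A) : inj a * inj b = inj (a * b).
Proof. by rewrite /inj triv_ext_mulE !scaler0 addr0. Qed.

Lemma fst_add (x y : T) : (x + y).1 = x.1 + y.1. Proof. by []. Qed.
Lemma fst_opp (x : T) : (- x).1 = - x.1. Proof. by []. Qed.
Lemma fst_mul (x y : T) : (x * y).1 = x.1 * y.1. Proof. by case: x; case: y. Qed.
Lemma fst_one : (1 : T).1 = 1. Proof. by []. Qed.
Lemma snd_add (x y : T) : (x + y).2 = x.2 + y.2. Proof. by []. Qed.
Lemma snd_one : (1 : T).2 = 0. Proof. by []. Qed.

Lemma unit_nil (h : E) : ((1, h) : T) * (1, - h) = 1.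
Proof.
rewrite triv_ext_mulE mulr1 !scale1r addNr; by [].
Qed.

Lemma fix_lem (V c s : T) : (V - 1 - c * s).1 = 0 ->
  V * (1, - (V - 1 - c * s).2) - 1 = c * (s * (1, - (V - 1 - c * s).2)).
Proof.
set n := V - 1 - c * s => hn.
have hV : V = (1 + n) + c * s by rewrite /n -addrA subrK addrC subrK.
have h1 : 1 + n = ((1, n.2) : T).
  by rewrite [n]surjective_pairing hn /=; congr pair; rewrite ?addr0 ?add0r.
rewrite {1}hV h1 mulrDl unit_nil mulrA.
by rewrite addrAC subrr add0r.
Qed.

Lemma qsr_equiv (c : T) : quot_stable_range1 c <-> quot_stable_range1 c.1.
Proof.
split.
- move=> H a b [x [u [t ht]]].
  pose w : T := (1, t *: c.2).
  have [Y [Z [S hS]]] : exists Y Z : T, in_principal c ((inj a + inj b * Y) * Z - 1).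
    apply: H; exists (inj x * w), (inj u * w).
    set W := inj a * inj x + inj b * inj u.
    have hW : W = c * inj t + (1, - (t *: c.2)).
      rewrite /W !inj_mul [c]surjective_pairing /inj triv_ext_mulE scaler0 add0r.
      congr pair; first by rewrite -ht /= subrK.
      by rewrite /= addr0 subrr.
    exists (inj t * w).
    rewrite !mulrA -mulrDl -/W hW mulrDl.
    have -> : ((1, - (t *: c.2)) : T) * w = 1 by rewrite /w -{2}(opprK (t *: c.2)) unit_nil.
    by rewrite addrK.
  exists Y.1, Z.1, S.1.
  have := congr1 fst hS.
  by rewrite fst_add fst_opp !fst_mul fst_add fst_mul /=.
- move=> H a b [X [U [S hS]]].
  have h1 : in_principal c.1 (a.1 * X.1 + b.1 * U.1 - 1).
    exists S.1; have := congr1 fst hS.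
    by rewrite fst_add fst_opp !fst_mul fst_add !fst_mul.
  have [y [z [s hs]]] := H _ _ (ex_intro _ X.1 (ex_intro _ U.1 h1)).
  set V := (a + b * inj y) * inj z.
  have hn : (V - 1 - c * inj s).1 = 0.
    rewrite fst_add fst_opp fst_add fst_opp !fst_mul fst_add fst_mul /=.
    by rewrite -/(_ - 1) hs subrr.
  pose w : T := (1, - (V - 1 - c * inj s).2).
  exists (inj y), (inj z * w), (inj s * w).
  by rewrite mulrA fix_lem.
Qed.

End Aux.

Theorem lemma3p11 (A : comPzRingType) (E : lmodType A) :
  locally_stable (A ∝ E) <-> locally_stable A.
Proof.
split.
- move=> H a b [x [u hxu]].
  have [Y hY] : exists Y : A ∝ E, quot_stable_range1 (@inj A E a + @inj A E b * Y).
    apply: H; exists (@inj A E x), (@inj A E u).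
    rewrite !inj_mul /inj; apply: (congr2 pair hxu); exact: addr0.
  exists Y.1.
  move/qsr_equiv: hY.
  by rewrite fst_add fst_mul.
- move=> H a b [X [U hXU]].
  have h1 : a.1 * X.1 + b.1 * U.1 = 1.
    by have := congr1 fst hXU; rewrite fst_add !fst_mul.
  have [y hy] := H _ _ (ex_intro _ X.1 (ex_intro _ U.1 h1)).
  exists (@inj A E y); apply/qsr_equiv.
  by rewrite fst_add fst_mul.
Qed.
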